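(* Let $\mathcal G$ be a topological $2$-group, $X$ a topological space, $\mathcal U=\{U_i\}_{i\in I}$ an open cover of $X$, and let $c,c'$ be $\mathcal G$-valued Čech cocycles subordinate to $\mathcal U$. Then $c$ and $c'$ are cohomologous if and only if there is a $\mathcal G$-bundle morphism between $\pi_c$ and $\pi_{c'}$.
   Context: Notation: topological $2$-groups $\mathcal G=(\mathcal G_1\rightrightarrows\mathcal G_0)$ (groupoids internal to topological groups, product $g*h=h1_{t(g)^{-1}}g$), $\mathcal E=\mathrm{Ker}(s)$ with ${}^xe=1_xe1_{x^{-1}}$; $U_{i_1\cdots i_n}=U_{i_1}\cap\dots\cap U_{i_n}$. A $\mathcal G$-valued Čech cocycle subordinate to $\mathcal U$ is $c=(\mathbf x,\mathbf e)$, $\mathbf x_{ij}\colon U_{ij}\to\mathcal G_0$, $\mathbf e_{ijk}\colon U_{ijk}\to\mathcal E$ continuous, with $t(\mathbf e_{ijk})\mathbf x_{ij}\mathbf x_{jk}=\mathbf x_{ik}$ and $\mathbf e_{ikl}\mathbf e_{ijk}=\mathbf e_{ijl}\,{}^{\mathbf x_{ij}}\mathbf e_{jkl}$. Cocycles $(\mathbf x,\mathbf e)$, $(\mathbf x',\mathbf e')$ are cohomologous if there are continuous $a_i\colon U_i\to\mathcal G_0$, $d_{ij}\colon U_{ij}\to\mathcal E$ with $\mathbf x'_{ij}=a_it(d_{ij})\mathbf x_{ij}a_j^{-1}$ on $U_{ij}$ and $\mathbf e'_{ijk}={}^{a_i}\bigl(d_{ik}\mathbf e_{ijk}\,{}^{\mathbf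 x_{ij}}(d_{jk}^{-1})d_{ij}^{-1}\bigr)$ on $U_{ijk}$. To a cocycle $c$ is associated the principal $\mathcal G$-bundle $\pi_c\colon P_c\to\overline X$: $P_0=\coprod_iU_i\times\mathcal G_0$, $P_1=\coprod_{i,j}U_{ij}\times\mathcal G_1$, $s((v,g)_{ij})=(v,s(g))_i$, $t((v,g)_{ij})=(v,\mathbf x_{ij}(v)^{-1}t(g))_j$, $(v,g)_{ij}*(v,h)_{jk}=(v,\mathbf e_{ijk}(v)(g*(1_{\mathbf x_{ij}(v)}h)))_{ik}$, right $\mathcal G$-action by right multiplication in the second coordinate, $\pi_c$ the projection to $X$ ($\overline X=(X\rightrightarrows X)$). A $\mathcal G$-bundle morphism from $\pi\colon P\to\overline X$ to $\pi'\colon P'\to\overline X$ is a $\mathcal G$-equivariant continuous functor $f\colon P\to P'$ with $\pi'f=\pi$. *)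

(* Defs.v *)
From HB Require Import structures.
From mathcomp Require Import all_boot all_algebra.
From mathcomp Require Import all_classical all_reals all_analysis.

Set Implicit Arguments.
Unset Strict Implicit.
Unset Printing Implicit Defensive.

Local Open Scope classical_set_scope.

Record isTopGroup (G : topologicalType) (mul : G -> G -> G) (inv : G -> G)
    (one : G) : Prop := {
  tg_assoc : forall x y z, mul x (mul y z) = mul (mul x y) z;
  tg_mul1g : forall x, mul one x = x;
  tg_mulg1 : forall x, mul x one = x;
  tg_mulVg : forall x, mul (inv x) x = one;
  tg_mulgV : forall x, mul x (inv x) = one;
  tg_mul_cont : continuous (fun p : G * G => mul p.1 p.2);
  tg_inv_cont : continuous inv }.

Definition is_hom (G H : Type) (mG : G -> G -> G) (mH : H -> H -> H)
  (f : G -> H) : Prop := forall x y, f (mG x y) = mH (f x) (f y).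

(* Arrows of G1 go from (src g) to (tgt g); composition is written in  *)
(* diagrammatic order: comp g h = g * h is defined when tgt g = src h. *)

Record TwoGroup := {
  G0 : topologicalType;
  G1 : topologicalType;
  m0 : G0 -> G0 -> G0;  i0 : G0 -> G0;  e0 : G0;
  m1 : G1 -> G1 -> G1;  i1 : G1 -> G1;  e1 : G1;
  src : G1 -> G0;
  tgt : G1 -> G0;
  idm : G0 -> G1;
  comp : G1 -> G1 -> G1;
  ginv : G1 -> G1;
  G0_topgroup : isTopGroup m0 i0 e0;
  G1_topgroup : isTopGroup m1 i1 e1;
  src_idm : forall x, src (idm x) = x;
  tgt_idm : forall x, tgt (idm x) = x;
  src_comp : forall g h, tgt g = src h -> src (comp g h) = src g;
  tgt_comp : forall g h, tgt g = src h -> tgt (comp g h) = tgt h;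
  comp_idml : forall g, comp (idm (src g)) g = g;
  comp_idmr : forall g, comp g (idm (tgt g)) = g;
  compA : forall f g h, tgt f = src g -> tgt g = src h ->
    comp (comp f g) h = comp f (comp g h);
  src_ginv : forall g, src (ginv g) = tgt g;
  tgt_ginv : forall g, tgt (ginv g) = src g;
  comp_ginvr : forall g, comp g (ginv g) = idm (src g);
  comp_ginvl : forall g, comp (ginv g) g = idm (tgt g);
  src_hom : is_hom m1 m0 src;
  tgt_hom : is_hom m1 m0 tgt;
  idm_hom : is_hom m0 m1 idm;
  ginv_hom : is_hom m1 m1 ginv;
  comp_hom : forall g g' h h', tgt g = src h -> tgt g' = src h' ->
    comp (m1 g g') (m1 h h') = m1 (comp g h) (comp g' h');
  src_cont : continuous src;
  tgt_cont : continuous tgt;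
  idm_cont : continuous idm;
  ginv_cont : continuous ginv;
  comp_cont : {within [set p : G1 * G1 | tgt p.1 = src p.2],
                continuous (fun p : G1 * G1 => comp p.1 p.2)} }.

Section TwoGroupDefs.
Variable G : TwoGroup.

Definition inE (e : G1 G) : Prop := src e = e0 G.

Definition actE (x : G0 G) (e : G1 G) : G1 G :=
  m1 (m1 (idm x) e) (idm (i0 x)).

Variables (X : topologicalType) (I : choiceType) (U : I -> set X).

(* The maps
   x_ij : U_ij -> G0 and e_ijk : U_ijk -> E are represented by functions on
   all of X whose restrictions to U_ij (resp. U_ijk) are continuous (and,
   for e, take values in E = Ker s there); only these restrictions matter. *)
Definition is_cocycle (x : I -> I -> X -> G0 G) (e : I -> I -> I -> X -> G1 G)
  : Prop :=
  [/\ (forall i j, {within U i `&` U j, continuous (x i j)}),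
      (forall i j k, {within U i `&` U j `&` U k, continuous (e i j k)}),
      (forall i j k v, (U i `&` U j `&` U k) v -> inE (e i j k v)),
      (forall i j k v, (U i `&` U j `&` U k) v ->
         m0 (m0 (tgt (e i j k v)) (x i j v)) (x j k v) = x i k v) &
      (forall i j k l v, (U i `&` U j `&` U k `&` U l) v ->
         m1 (e i k l v) (e i j k v) = m1 (e i j l v) (actE (x i j v) (e j k l v)))].

Record cocycle := Cocycle {
  cx : I -> I -> X -> G0 G;
  ce : I -> I -> I -> X -> G1 G;
  cocycleP : is_cocycle cx ce }.

Definition cohomologous (c c' : cocycle) : Prop :=
  exists (a : I -> X -> G0 G) (d : I -> I -> X -> G1 G),
  [/\ (forall i, {within U i, continuous (a i)}),
      (forall i j, {within U i `&` U j, continuous (d i j)}),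
      (forall i j v, (U i `&` U j) v -> inE (d i j v)),
      (forall i j v, (U i `&` U j) v ->
         cx c' i j v = m0 (m0 (m0 (a i v) (tgt (d i j v))) (cx c i j v)) (i0 (a j v))) &
      (forall i j k v, (U i `&` U j `&` U k) v ->
         ce c' i j k v = actE (a i v)
           (m1 (m1 (m1 (d i k v) (ce c i j k v))
                   (actE (cx c i j v) (i1 (d j k v))))
               (i1 (d i j v))))].

Definition P0fam (i : I) : topologicalType :=
  Topological.clone (set_type (U i) * G0 G)%type _.
Definition P1fam (ij : I * I) : topologicalType :=
  Topological.clone (set_type (U ij.1 `&` U ij.2) * G1 G)%type _.
Definition P0 : topologicalType := {i : I & P0fam i}.
Definition P1 : topologicalType := {ij : (I * I)%type & P1fam ij}.

Definition resl (A B : set X) (w : set_type (A `&` B)) : set_type A :=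
  exist _ (val w) (mem_set (set_valP w).1).
Definition resr (A B : set X) (w : set_type (A `&` B)) : set_type B :=
  exist _ (val w) (mem_set (set_valP w).2).

Definition pi0 (p : P0) : X := val (projT2 p).1.
Definition pi1 (a : P1) : X := val (projT2 a).1.

Definition srcP (a : P1) : P0 :=
  existT P0fam (projT1 a).1 (resl (projT2 a).1, src (projT2 a).2).

Definition tgtP (c : cocycle) (a : P1) : P0 :=
  existT P0fam (projT1 a).2
    (resr (projT2 a).1,
     m0 (i0 (cx c (projT1 a).1 (projT1 a).2 (pi1 a))) (tgt (projT2 a).2)).

Definition compP (c : cocycle) (a b r : P1) : Prop :=
  tgtP c a = srcP b /\
  exists i j k (v : X) (w1 : set_type (U i `&` U j)) (w2 : set_type (U j `&` U k))
         (w3 : set_type (U i `&` U k)) (g h : G1 G),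
  [/\ val w1 = v /\ val w2 = v /\ val w3 = v,
      a = existT P1fam (i, j) (w1, g),
      b = existT P1fam (j, k) (w2, h) &
      r = existT P1fam (i, k)
            (w3, m1 (ce c i j k v) (comp g (m1 (idm (cx c i j v)) h)))].

Definition act0 (p : P0) (y : G0 G) : P0 :=
  existT P0fam (projT1 p) ((projT2 p).1, m0 (projT2 p).2 y).
Definition act1 (a : P1) (g : G1 G) : P1 :=
  existT P1fam (projT1 a) ((projT2 a).1, m1 (projT2 a).2 g).

Definition bundle_morphism (c c' : cocycle) (f0 : P0 -> P0) (f1 : P1 -> P1)
  : Prop :=
  (continuous f0 /\ continuous f1) /\
  ((forall a, srcP (f1 a) = f0 (srcP a)) /\
   (forall a, tgtP c' (f1 a) = f0 (tgtP c a)) /\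
   (forall a b r, compP c a b r -> compP c' (f1 a) (f1 b) (f1 r))) /\
  ((forall p y, f0 (act0 p y) = act0 (f0 p) y) /\
   (forall a g, f1 (act1 a g) = act1 (f1 a) g)) /\
  ((forall p, pi0 (f0 p) = pi0 p) /\ (forall a, pi1 (f1 a) = pi1 a)).

End TwoGroupDefs.

(* Main.v *)
Require Import Defs.
From HB Require Import structures.
From mathcomp Require Import all_boot all_algebra.
From mathcomp Require Import all_classical all_reals all_analysis.

Local Open Scope classical_set_scope.

Module Aux.
Set Implicit Arguments.
Unset Strict Implicit.
Unset Printing Implicit Defensive.


Section Grp.
Variables (T : topologicalType) (mul : T -> T -> T) (inv : T -> T) (one : T).
Hypothesis H : isTopGroup mul inv one.
Lemma gA x y z : mul x (mul y z) = mul (mul x y) z. Proof. by case: H. Qed.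
Lemma g1l x : mul one x = x. Proof. by case: H. Qed.
Lemma g1r x : mul x one = x. Proof. by case: H. Qed.
Lemma gVl x : mul (inv x) x = one. Proof. by case: H. Qed.
Lemma gVr x : mul x (inv x) = one. Proof. by case: H. Qed.
Lemma gK y x : mul (mul y x) (inv x) = y.
Proof. by rewrite -gA gVr g1r. Qed.
Lemma gKV y x : mul (mul y (inv x)) x = y.
Proof. by rewrite -gA gVl g1r. Qed.
Lemma gcanl x y z : mul x y = mul x z -> y = z.
Proof. by move=> e; rewrite -[y]g1l -(gVl x) -gA e gA gVl g1l. Qed.
Lemma gcanr x y z : mul y x = mul z x -> y = z.
Proof. by move=> e; rewrite -[y](gK y x) -[z](gK z x) e. Qed.
Lemma ginvE x y : mul x y = one -> inv x = y.
Proof. by move=> e; apply: (@gcanl x); rewrite gVr. Qed.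
Lemma gVV x : inv (inv x) = x.
Proof. by apply: ginvE; rewrite gVl. Qed.
Lemma gVM x y : inv (mul x y) = mul (inv y) (inv x).
Proof. by apply: ginvE; rewrite gA gK gVr. Qed.
Lemma gV1 : inv one = one.
Proof. by apply: ginvE; rewrite g1l. Qed.
End Grp.


Section TG.
Variable G : TwoGroup.

Lemma m1A (x y z : G1 G) : m1 x (m1 y z) = m1 (m1 x y) z. Proof. exact: (gA (G1_topgroup G)). Qed.
Lemma m11l (x : G1 G) : m1 (e1 G) x = x. Proof. exact: (g1l (G1_topgroup G)). Qed.
Lemma m11r (x : G1 G) : m1 x (e1 G) = x. Proof. exact: (g1r (G1_topgroup G)). Qed.
Lemma m1Vl (x : G1 G) : m1 (i1 x) x = e1 G. Proof. exact: (gVl (G1_topgroup G)). Qed.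
Lemma m1Vr (x : G1 G) : m1 x (i1 x) = e1 G. Proof. exact: (gVr (G1_topgroup G)). Qed.
Lemma m1K (y x : G1 G) : m1 (m1 y x) (i1 x) = y. Proof. exact: (gK (G1_topgroup G)). Qed.
Lemma m1KV (y x : G1 G) : m1 (m1 y (i1 x)) x = y. Proof. exact: (gKV (G1_topgroup G)). Qed.
Lemma i1K (x : G1 G) : i1 (i1 x) = x. Proof. exact: (gVV (G1_topgroup G)). Qed.
Lemma i1M (x y : G1 G) : i1 (m1 x y) = m1 (i1 y) (i1 x). Proof. exact: (gVM (G1_topgroup G)). Qed.
Lemma i11 : i1 (e1 G) = e1 G. Proof. exact: (gV1 (G1_topgroup G)). Qed.

Lemma m0A (x y z : G0 G) : m0 x (m0 y z) = m0 (m0 x y) z. Proof. exact: (gA (G0_topgroup G)). Qed.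
Lemma m01l (x : G0 G) : m0 (e0 G) x = x. Proof. exact: (g1l (G0_topgroup G)). Qed.
Lemma m01r (x : G0 G) : m0 x (e0 G) = x. Proof. exact: (g1r (G0_topgroup G)). Qed.
Lemma m0Vl (x : G0 G) : m0 (i0 x) x = e0 G. Proof. exact: (gVl (G0_topgroup G)). Qed.
Lemma m0Vr (x : G0 G) : m0 x (i0 x) = e0 G. Proof. exact: (gVr (G0_topgroup G)). Qed.
Lemma m0K (y x : G0 G) : m0 (m0 y x) (i0 x) = y. Proof. exact: (gK (G0_topgroup G)). Qed.
Lemma m0KV (y x : G0 G) : m0 (m0 y (i0 x)) x = y. Proof. exact: (gKV (G0_topgroup G)). Qed.
Lemma i0K (x : G0 G) : i0 (i0 x) = x. Proof. exact: (gVV (G0_topgroup G)). Qed.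
Lemma i0M (x y : G0 G) : i0 (m0 x y) = m0 (i0 y) (i0 x). Proof. exact: (gVM (G0_topgroup G)). Qed.
Lemma i01 : i0 (e0 G) = e0 G. Proof. exact: (gV1 (G0_topgroup G)). Qed.

Lemma hom1 (A B : topologicalType) (mA : A -> A -> A) iA oA (mB : B -> B -> B) iB oB
  (f : A -> B) : isTopGroup mA iA oA -> isTopGroup mB iB oB -> is_hom mA mB f ->
  f oA = oB.
Proof.
move=> hA hB hf; apply: (gcanl hB (x := f oA)).
by rewrite -hf (g1l hA) (g1r hB).
Qed.
Lemma homV (A B : topologicalType) (mA : A -> A -> A) iA oA (mB : B -> B -> B) iB oB
  (f : A -> B) : isTopGroup mA iA oA -> isTopGroup mB iB oB -> is_hom mA mB f ->
  forall x, f (iA x) = iB (f x).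
Proof.
move=> hA hB hf x; apply: esym; apply: (ginvE hB).
by rewrite -hf (gVr hA) (hom1 hA hB hf).
Qed.

Lemma idmM (x y : G0 G) : idm (m0 x y) = m1 (idm x) (idm y). Proof. exact: idm_hom. Qed.
Lemma idm1 : idm (e0 G) = e1 G. Proof. exact: (hom1 (G0_topgroup G) (G1_topgroup G) (@idm_hom G)). Qed.
Lemma idmV (x : G0 G) : idm (i0 x) = i1 (idm x). Proof. exact: (homV (G0_topgroup G) (G1_topgroup G) (@idm_hom G)). Qed.
Lemma srcM (x y : G1 G) : src (m1 x y) = m0 (src x) (src y). Proof. exact: src_hom. Qed.
Lemma src1 : src (e1 G) = e0 G. Proof. exact: (hom1 (G1_topgroup G) (G0_topgroup G) (@src_hom G)). Qed.
Lemma srcV (x : G1 G) : src (i1 x) = i0 (src x). Proof. exact: (homV (G1_topgroup G) (G0_topgroup G) (@src_hom G)). Qed.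
Lemma tgtM (x y : G1 G) : tgt (m1 x y) = m0 (tgt x) (tgt y). Proof. exact: tgt_hom. Qed.
Lemma tgt1 : tgt (e1 G) = e0 G. Proof. exact: (hom1 (G1_topgroup G) (G0_topgroup G) (@tgt_hom G)). Qed.
Lemma tgtV (x : G1 G) : tgt (i1 x) = i0 (tgt x). Proof. exact: (homV (G1_topgroup G) (G0_topgroup G) (@tgt_hom G)). Qed.
Lemma idm_inj : injective (@idm G).
Proof. by move=> x y e; rewrite -(src_idm x) e src_idm. Qed.

Lemma compE (g h : G1 G) : tgt g = src h ->
  Defs.comp g h = m1 (m1 g (i1 (idm (tgt g)))) h.
Proof.
move=> e.
have -> : Defs.comp g h = Defs.comp (m1 g (e1 G)) (m1 (idm (tgt g)) (m1 (i1 (idm (tgt g))) h)).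
  by rewrite m11r m1A m1Vr m11l.
rewrite comp_hom; first last.
- by rewrite tgt1 srcM srcV src_idm e m0Vl.
- by rewrite src_idm.
rewrite comp_idmr -m1A; congr (m1 g _).
have -> : e1 G = idm (src (m1 (i1 (idm (tgt g))) h)).
  by rewrite srcM srcV src_idm e m0Vl idm1.
by rewrite comp_idml.
Qed.

Lemma peiffer (a b : G1 G) : src a = e0 G -> tgt b = e0 G -> m1 a b = m1 b a.
Proof.
move=> sa tb.
have E1 : Defs.comp (m1 b (e1 G)) (m1 (e1 G) a) = m1 b a.
  rewrite comp_hom; last by rewrite tgt1.
    have -> : Defs.comp b (e1 G) = b by rewrite -idm1 -tb comp_idmr.
    by rewrite -idm1 -sa comp_idml.
  by rewrite tb src1.
have E2 : Defs.comp (m1 (e1 G) b) (m1 a (e1 G)) = m1 a b.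
  rewrite comp_hom; last by rewrite tb src1.
    have -> : Defs.comp b (e1 G) = b by rewrite -idm1 -tb comp_idmr.
    by rewrite -idm1 -sa comp_idml.
  by rewrite tgt1.
by rewrite -E2 -E1 m11r m11l m11r m11l.
Qed.

Lemma kappa (phi Y : G1 G) : src Y = e0 G ->
  m1 (m1 (m1 phi (i1 (idm (tgt phi)))) Y) (idm (tgt phi)) = m1 Y phi.
Proof.
move=> sY.
have k : tgt (m1 phi (i1 (idm (tgt phi)))) = e0 G.
  by rewrite tgtM tgtV tgt_idm m0Vr.
rewrite -(peiffer sY k) -m1A; congr (m1 Y _).
by rewrite m1KV.

Qed.

Lemma peiffer2 (e F : G1 G) : src e = e0 G -> src F = e0 G ->
  m1 (m1 (idm (tgt e)) F) (i1 (idm (tgt e))) = m1 (m1 e F) (i1 e).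
Proof.
move=> se sF.
have sT : src (m1 (m1 (idm (tgt e)) F) (i1 (idm (tgt e)))) = e0 G.
  by rewrite !srcM srcV src_idm sF m01r m0Vr.
have k := @kappa e _ sT.
apply: (gcanr (G1_topgroup G) (x := e)); rewrite m1KV -k.
by rewrite !m1A m1KV m1KV.
Qed.

End TG.

Ltac gsimpl := repeat progress rewrite ?idmM ?idmV ?idm1 ?i1M ?i1K ?i11 ?m1A ?m1K ?m1KV ?m1Vr ?m1Vl ?m11l ?m11r.
Ltac g0simpl := repeat progress rewrite ?i0M ?i0K ?i01 ?m0A ?m0K ?m0KV ?m0Vr ?m0Vl ?m01l ?m01r.
Ltac gpush := repeat progress rewrite ?srcM ?srcV ?src1 ?src_idm ?tgtM ?tgtV ?tgt1 ?tgt_idm.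

Ltac gsimpl_in H := repeat progress rewrite ?idmM ?idmV ?idm1 ?i1M ?i1K ?i11 ?m1A ?m1K ?m1KV ?m1Vr ?m1Vl ?m11l ?m11r in H.


Section Fwd.
Variable G : TwoGroup.
Implicit Types (a x : G0 G) (d e h g : G1 G).

Lemma fwd_src ai d h : src d = e0 G ->
  src (m1 (m1 (idm ai) d) h) = m0 ai (src h).
Proof. by move=> sd; gpush; rewrite sd m01r. Qed.

Lemma fwd_tgt ai aj d x x' h : x' = m0 (m0 (m0 ai (tgt d)) x) (i0 aj) ->
  m0 (i0 x') (tgt (m1 (m1 (idm ai) d) h)) = m0 aj (m0 (i0 x) (tgt h)).
Proof. by move=> ->; gpush; g0simpl. Qed.

Lemma fwd_comp ai aj dij dik djk xij xij' eijk eijk' g h :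
  src dij = e0 G -> src dik = e0 G -> src djk = e0 G ->
  xij' = m0 (m0 (m0 ai (tgt dij)) xij) (i0 aj) ->
  eijk' = actE ai (m1 (m1 (m1 dik eijk) (actE xij (i1 djk))) (i1 dij)) ->
  tgt g = src (m1 (idm xij) h) ->
  m1 (m1 (idm ai) dik) (m1 eijk (Defs.comp g (m1 (idm xij) h))) =
  m1 eijk' (Defs.comp (m1 (m1 (idm ai) dij) g)
                 (m1 (idm xij') (m1 (m1 (idm aj) djk) h))).
Proof.
move=> sij sik sjk ex ee ec.
rewrite compE // compE; last first.
  by rewrite ex; gpush; rewrite sjk ec; gpush; g0simpl.
rewrite ee ex /actE; gpush; gsimpl.
have key : forall P, m1 (m1 (m1 (m1 (m1 P (idm xij)) (i1 djk)) (i1 (idm xij))) g) (i1 (idm (tgt g))) = m1 (m1 (m1 (m1 (m1 P g) (i1 (idm (tgt g)))) (idm xij)) (i1 djk)) (i1 (idm xij)).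
  move=> P; rewrite -!m1A; congr (m1 P _).
  have := @peiffer G (m1 (m1 (idm xij) (i1 djk)) (i1 (idm xij))) (m1 g (i1 (idm (tgt g)))).
  rewrite !m1A; apply.
    by gpush; rewrite sjk; g0simpl.
  by gpush; g0simpl.
by rewrite key; gsimpl.
Qed.
End Fwd.


Section Bwd.
Variable G : TwoGroup.

Definition dval (ai : G0 G) (f1 f2 : G1 G) (y : G0 G) (phi : G1 G) : G1 G :=
  m1 (m1 (m1 (m1 (i1 (idm ai)) (i1 f1)) f2) (idm y)) phi.

Lemma back_B (ai bj xij yij yiK yKL yiL yjL : G0 G)
  (eijk fijk fijL fiKL fikM fiKM fKLM fjkM fjLM fiLM fijM phiij phiik phijk : G1 G) :
  tgt phiij = m0 (m0 yKL bj) (i0 xij) ->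
  src phijk = bj ->
  m1 phiik (m1 eijk (idm xij)) =
    m1 fKLM (Defs.comp (m1 phiij (idm xij)) (m1 (idm yKL) phijk)) ->
  m0 (m0 (tgt fiKL) yiK) yKL = yiL ->
  m0 (m0 (tgt fijL) yij) yjL = yiL ->
  m1 fiLM fiKL = m1 fiKM (actE yiK fKLM) ->
  m1 fiLM fijL = m1 fijM (actE yij fjLM) ->
  m1 fikM fijk = m1 fijM (actE yij fjkM) ->
  src fiKL = e0 G -> src fijL = e0 G -> src fjLM = e0 G -> src fjkM = e0 G ->
  fijk = actE ai (m1 (m1 (m1 (dval ai fikM fiKM yiK phiik) eijk)
                   (actE xij (i1 (dval (m0 yjL bj) fjkM fjLM yjL phijk))))
                 (i1 (dval ai fijL fiKL yiK phiij))).
Proof.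
move=> tij sjk hC cx1 cx2 ce1 ce2 ce3 s1 s2 s3 s4.
have C2 : m1 phiik (m1 eijk (idm xij)) =
   m1 (m1 (m1 (m1 fKLM phiij) (idm xij)) (i1 (idm bj))) phijk.
  rewrite hC compE; last by gpush; rewrite tij sjk; g0simpl.
  gpush; rewrite tij; gsimpl; done.
rewrite /dval /actE; gsimpl.
have key1 : forall P, m1 (m1 (m1 P phiik) eijk) (idm xij) =
   m1 (m1 (m1 (m1 (m1 P fKLM) phiij) (idm xij)) (i1 (idm bj))) phijk.
  by move=> P; rewrite -!m1A C2 !m1A.
rewrite key1; gsimpl.
have key2 : forall P, m1 (m1 (m1 (m1 (m1 (m1 (m1 (m1 (m1 (m1 P phiij) (idm xij))
     (i1 (idm bj))) (i1 (idm yjL))) (i1 fjLM)) fjkM) (idm yjL)) (idm bj)) (i1 (idm xij)))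
     (i1 phiij) =
   m1 (m1 (m1 (m1 (m1 (m1 P (idm yKL)) (i1 (idm yjL))) (i1 fjLM)) fjkM) (idm yjL))
     (i1 (idm yKL)).
  move=> P; rewrite -!m1A; congr (m1 P _); rewrite !m1A.
  set Y := m1 (m1 (m1 (m1 (m1 (idm yKL) (i1 (idm yjL))) (i1 fjLM)) fjkM) (idm yjL)) (i1 (idm yKL)).
  have sY : src Y = e0 G by rewrite /Y; gpush; rewrite s3 s4; g0simpl.
  have k := @kappa G phiij Y sY.
  rewrite tij /Y in k; gsimpl_in k.
  by rewrite k /Y; gsimpl.
rewrite key2.
have eKL : yKL = m0 (m0 (i0 yiK) (i0 (tgt fiKL))) yiL by rewrite -cx1; g0simpl.
have ejL : yjL = m0 (m0 (i0 yij) (i0 (tgt fijL))) yiL by rewrite -cx2; g0simpl.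
rewrite eKL ejL; gsimpl.
have eF : fKLM = m1 (m1 (m1 (i1 (idm yiK)) (i1 fiKM)) (m1 fiLM fiKL)) (idm yiK).
  by rewrite ce1 /actE; gsimpl.
rewrite eF; gsimpl.
set F := m1 (m1 (m1 (idm yij) (i1 fjLM)) fjkM) (i1 (idm yij)).
have sF : src F = e0 G by rewrite /F; gpush; rewrite s3 s4; g0simpl.
have k3 := @peiffer2 G fijL F s2 sF.
have key3 : forall P, m1 (m1 (m1 (m1 (m1 (m1 P (idm (tgt fijL))) (idm yij)) (i1 fjLM)) fjkM) (i1 (idm yij))) (i1 (idm (tgt fijL)))
  = m1 (m1 (m1 (m1 (m1 (m1 P fijL) (idm yij)) (i1 fjLM)) fjkM) (i1 (idm yij))) (i1 fijL).
  move=> P; rewrite -!m1A; congr (m1 P _); rewrite !m1A.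
  by rewrite /F in k3; gsimpl_in k3.
rewrite key3.
set Y := m1 (m1 (m1 (m1 (m1 fijL (idm yij)) (i1 fjLM)) fjkM) (i1 (idm yij))) (i1 fijL).
have sY : src Y = e0 G by rewrite /Y; gpush; rewrite s2 s3 s4; g0simpl.
have k4 := @kappa G fiKL Y sY.
have key4 : forall P, m1 (m1 (m1 (m1 (m1 (m1 (m1 (m1 (m1 P fiKL) (i1 (idm (tgt fiKL)))) fijL) (idm yij)) (i1 fjLM)) fjkM) (i1 (idm yij))) (i1 fijL)) (idm (tgt fiKL))
   = m1 (m1 (m1 (m1 (m1 (m1 (m1 P fijL) (idm yij)) (i1 fjLM)) fjkM) (i1 (idm yij))) (i1 fijL)) fiKL.
  move=> P; rewrite -!m1A; congr (m1 P _); rewrite !m1A.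
  by rewrite /Y in k4; gsimpl_in k4.
rewrite key4; gsimpl.
have eL : fiLM = m1 (m1 fijM (actE yij fjLM)) (i1 fijL).
  by rewrite -ce2; gsimpl.
rewrite eL /actE; gsimpl.
have ek : fijk = m1 (i1 fikM) (m1 fijM (actE yij fjkM)).
  by rewrite -ce3; gsimpl.
by rewrite ek /actE; gsimpl.
Qed.
Lemma back_E (ai bi yiK : G0 G) (f1 f2 phi : G1 G) :
  src phi = bi -> ai = m0 yiK bi -> src f1 = e0 G -> src f2 = e0 G ->
  src (dval ai f1 f2 yiK phi) = e0 G.
Proof.
move=> sp -> s1 s2; rewrite /dval; gpush; rewrite sp s1 s2; g0simpl; done.
Qed.

Lemma back_A (ai bj xij yij yiK yKL yiL yjL : G0 G) (fijL fiKL phi : G1 G) :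
  tgt phi = m0 (m0 yKL bj) (i0 xij) ->
  m0 (m0 (tgt fiKL) yiK) yKL = yiL ->
  m0 (m0 (tgt fijL) yij) yjL = yiL ->
  yij = m0 (m0 (m0 ai (tgt (dval ai fijL fiKL yiK phi))) xij) (i0 (m0 yjL bj)).
Proof.
move=> tp cx1 cx2.
have eKL : yKL = m0 (m0 (i0 yiK) (i0 (tgt fiKL))) yiL by rewrite -cx1; g0simpl.
have ejL : yjL = m0 (m0 (i0 yij) (i0 (tgt fijL))) yiL by rewrite -cx2; g0simpl.
rewrite /dval; gpush; rewrite tp eKL ejL; g0simpl; done.
Qed.

End Bwd.

Lemma t1 (X : topologicalType) (A : set X) (x : A) : set_val x = val x.
Proof. reflexivity. Qed.
Lemma cont_val (X : topologicalType) (A : set X) : continuous (fun w : A => val w).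
Proof. exact: (@initial_continuous _ X set_val). Qed.
Lemma cont_pair (Z A B : topologicalType) (f : Z -> A) (g : Z -> B) z :
  {for z, continuous f} -> {for z, continuous g} -> {for z, continuous (fun w => (f w, g w))}.
Proof. move=> cf cg. exact: cvg_pair. Qed.
Lemma cont_fst (A B : topologicalType) : continuous (@fst A B).
Proof. move=> z; exact: cvg_fst. Qed.
Lemma cont_snd (A B : topologicalType) : continuous (@snd A B).
Proof. move=> z; exact: cvg_snd. Qed.
Lemma cont_op2 (Z T : topologicalType) (op : T -> T -> T)
  (hop : continuous (fun p : T * T => op p.1 p.2)) (f g : Z -> T) z :
  {for z, continuous f} -> {for z, continuous g} -> {for z, continuous (fun w => op (f w) (g w))}.
Proof.
move=> cf cg.
have := @continuous_comp Z (T * T)%type T (fun w => (f w, g w)) (fun p => op p.1 p.2) z (cont_pair cf cg) (hop _).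
by [].
Qed.
Lemma cont_open_at (X Y : topologicalType) (A : set X) (f : X -> Y) x :
  open A -> {within A, continuous f} -> A x -> {for x, continuous f}.
Proof. by move=> oA; rewrite continuous_open_subspace // => h Ax; apply: h; rewrite inE. Qed.
Lemma near_eq_cont (Z T : topologicalType) (f g : Z -> T) z :
  (\forall w \near z, f w = g w) -> f z = g z -> {for z, continuous g} -> {for z, continuous f}.
Proof.
move=> ne ez cg. 
move=> A /=; rewrite ez => nA.
rewrite /= nbhs_simpl /=.
near=> w.
rewrite /preimage /= (near ne w) //.
near: w. have := cg _ nA. by rewrite /= nbhs_simpl.
Unshelve. all: end_near.
Qed.
Lemma cont_const (Z T : topologicalType) (y : T) (z : Z) : {for z, continuous (fun _ : Z => y)}.
Proof. exact: cvg_cst. Qed.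

Lemma near_chart (J : choiceType) (T : J -> topologicalType) (Z : topologicalType)
  (h : Z -> {i : J & T i}) z : {for z, continuous h} ->
  \forall w \near z, projT1 (h w) = projT1 (h z).
Proof.
move=> ch.
have oS : open (existT T (projT1 (h z)) @` setT).
  by apply: existT_open_map; exact: openT.
have Sz : (existT T (projT1 (h z)) @` setT) (h z).
  by case: (h z) => i t /=; exists t.
have := ch _ (open_nbhs_nbhs (conj oS Sz)).
rewrite /= nbhs_simpl /=; apply: filterS => w [t _ <-] //.
Qed.

Lemma cont_coord (J : choiceType) (A : J -> topologicalType) (B : topologicalType) :
  continuous (fun p : {i : J & (A i * B)%type} => (projT2 p).2).
Proof.
have -> : (fun p : {i : J & (A i * B)%type} => (projT2 p).2) =
  unstable.sigT_fun (fun i (z : (A i * B)%type) => z.2) by [].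
by apply: sigT_continuous => i; exact: cont_snd.
Qed.


Section Fwd2.
Variables (G : TwoGroup) (X : topologicalType) (I : choiceType) (U : I -> set X).
Hypothesis U_open : forall i, open (U i).
Variables (c c' : cocycle G U).
Variables (a : I -> X -> G0 G) (d : I -> I -> X -> G1 G).
Hypothesis ha : forall i, {within U i, continuous (a i)}.
Hypothesis hd : forall i j, {within U i `&` U j, continuous (d i j)}.
Hypothesis hdE : forall i j v, (U i `&` U j) v -> Defs.inE (d i j v).
Hypothesis hx : forall i j v, (U i `&` U j) v ->
         cx c' i j v = m0 (m0 (m0 (a i v) (tgt (d i j v))) (cx c i j v)) (i0 (a j v)).
Hypothesis he : forall i j k v, (U i `&` U j `&` U k) v ->
         ce c' i j k v = actE (a i v)
           (m1 (m1 (m1 (d i k v) (ce c i j k v))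
                   (actE (cx c i j v) (i1 (d j k v))))
               (i1 (d i j v))).

Definition F0 (p : P0 G U) : P0 G U :=
  existT (P0fam G U) (projT1 p) ((projT2 p).1, m0 (a (projT1 p) (pi0 p)) (projT2 p).2).
Definition F1 (q : P1 G U) : P1 G U :=
  existT (P1fam G U) (projT1 q) ((projT2 q).1,
    m1 (m1 (idm (a (projT1 q).1 (pi1 q))) (d (projT1 q).1 (projT1 q).2 (pi1 q))) (projT2 q).2).

Lemma F0_cont : continuous F0.
Proof.
have -> : F0 = unstable.sigT_fun (fun i (z : P0fam G U i) =>
   existT (P0fam G U) i (z.1, m0 (a i (val z.1)) z.2)).
  by apply: funext => -[i z].
apply: sigT_continuous => i z.
apply: (@continuous_comp _ _ _ (fun z : P0fam G U i => (z.1, m0 (a i (val z.1)) z.2)) (existT (P0fam G U) i)); last exact: existT_continuous.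
apply: cont_pair; first exact: cont_fst.
apply: (cont_op2 (tg_mul_cont (G0_topgroup G))); last exact: cont_snd.
apply: (@continuous_comp _ _ _ fst (fun w : set_type (U i) => a i (val w))); first exact: cont_fst.
apply: (@continuous_comp _ _ _ (fun w : set_type (U i) => val w) (a i)); first exact: cont_val.
have h := cont_open_at (U_open i) (@ha i) (set_valP z.1). exact: h.
Qed.

Lemma F1_cont : continuous F1.
Proof.
have -> : F1 = unstable.sigT_fun (fun ij (z : P1fam G U ij) =>
   existT (P1fam G U) ij (z.1, m1 (m1 (idm (a ij.1 (val z.1))) (d ij.1 ij.2 (val z.1))) z.2)).
  by apply: funext => -[ij z].
apply: sigT_continuous => ij z.
apply: (@continuous_comp _ _ _ (fun z : P1fam G U ij => (z.1, m1 (m1 (idm (a ij.1 (val z.1))) (d ij.1 ij.2 (val z.1))) z.2)) (existT (P1fam G U) ij)); last exact: existT_continuous.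
apply: cont_pair; first exact: cont_fst.
apply: (cont_op2 (tg_mul_cont (G1_topgroup G))); last exact: cont_snd.
have zU := set_valP z.1.
apply: (cont_op2 (tg_mul_cont (G1_topgroup G))).
  have h1 : {for z, continuous (fun w : P1fam G U ij => a ij.1 (val w.1))}.
    apply: (@continuous_comp _ _ _ fst (fun w : set_type (U ij.1 `&` U ij.2) => a ij.1 (val w))); first exact: cont_fst.
    apply: (@continuous_comp _ _ _ (fun w : set_type (U ij.1 `&` U ij.2) => val w) (a ij.1)); first exact: cont_val.
    by apply: (cont_open_at (U_open ij.1) (@ha ij.1)); case: zU.
  exact: (continuous_comp h1 (@idm_cont G _)).
apply: (@continuous_comp _ _ _ fst (fun w : set_type (U ij.1 `&` U ij.2) => d ij.1 ij.2 (val w))); first exact: cont_fst.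
apply: (@continuous_comp _ _ _ (fun w : set_type (U ij.1 `&` U ij.2) => val w) (d ij.1 ij.2)); first exact: cont_val.
by apply: (cont_open_at (openI (U_open ij.1) (U_open ij.2)) (@hd ij.1 ij.2)).
Qed.

Lemma F_src q : srcP (F1 q) = F0 (srcP q).
Proof.
case: q => -[i j] [w h] /=; rewrite /srcP /F0 /F1 /=.
rewrite /pi1 /pi0 /= fwd_src //; exact: (hdE (set_valP w)).
Qed.

Lemma F_tgt q : tgtP c' (F1 q) = F0 (tgtP c q).
Proof.
case: q => -[i j] [w h] /=; rewrite /tgtP /F0 /F1 /pi1 /pi0 /=.
by rewrite (fwd_tgt _ (hx (set_valP w))).
Qed.

Lemma F_act0 p y : F0 (act0 p y) = act0 (F0 p) y.
Proof. by case: p => i [w z]; rewrite /F0 /act0 /pi0 /= m0A. Qed.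

Lemma F_act1 q g : F1 (act1 q g) = act1 (F1 q) g.
Proof. by case: q => ij [w z]; rewrite /F1 /act1 /pi1 /= m1A. Qed.

Lemma F_comp q1 q2 r : compP c q1 q2 r -> compP c' (F1 q1) (F1 q2) (F1 r).
Proof.
case=> eab [i [j [k [v [w1 [w2 [w3 [g [h [[ev1 [ev2 ev3]] e1 e2 e3]]]]]]]]]].
split; first by rewrite F_tgt F_src eab.
exists i, j, k, v, w1, w2, w3.
exists (m1 (m1 (idm (a i v)) (d i j v)) g), (m1 (m1 (idm (a j v)) (d j k v)) h).
split => //.
- by rewrite e1 /F1 /pi1 /= ev1.
- by rewrite e2 /F1 /pi1 /= ev2.
rewrite e3 /F1 /pi1 /= ev3.
apply: (f_equal (fun y => existT (P1fam G U) (i, k) (w3, y))).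
have U1 := set_valP w1; have U2 := set_valP w2.
rewrite ev1 in U1; rewrite ev2 in U2.
have Uijk : (U i `&` U j `&` U k) v by case: U1; case: U2.
have ec : tgt g = src (m1 (idm (cx c i j v)) h).
  have := f_equal (fun p : P0 G U => (projT2 p).2) eab.
  rewrite e1 e2 /tgtP /srcP /pi1 /= ev1 => eh.
  by gpush; rewrite -eh; g0simpl.
apply: fwd_comp => //.
- exact: (hdE U1).
- by apply: hdE; case: Uijk => -[].
- exact: (hdE U2).
- exact: (hx U1).
- exact: (he Uijk).
Qed.

Lemma F_morph : bundle_morphism c c' F0 F1.
Proof.
split; first by split; [exact: F0_cont | exact: F1_cont].
split; first by split; [exact: F_src | split; [exact: F_tgt | exact: F_comp]].
split; first by split; [exact: F_act0 | exact: F_act1].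
by split; [case | case].
Qed.

End Fwd2.


Lemma st_eq (T : Type) (A : set T) (w1 w2 : set_type A) : val w1 = val w2 -> w1 = w2.
Proof.
case: w1 w2 => v1 h1 [v2 h2] /= e; subst v2.
by rewrite (Prop_irrelevance h1 h2).
Qed.

Section Bwd2.
Variables (G : TwoGroup) (X : topologicalType) (I : choiceType) (U : I -> set X).
Hypothesis U_open : forall i, open (U i).
Variables (c c' : cocycle G U).
Variables (f0 : P0 G U -> P0 G U) (f1 : P1 G U -> P1 G U).
Hypothesis cf0 : continuous f0.
Hypothesis cf1 : continuous f1.
Hypothesis fsrc : forall q, srcP (f1 q) = f0 (srcP q).
Hypothesis ftgt : forall q, tgtP c' (f1 q) = f0 (tgtP c q).
Hypothesis fcomp : forall q1 q2 r, compP c q1 q2 r -> compP c' (f1 q1) (f1 q2) (f1 r).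
Hypothesis fact0 : forall p y, f0 (act0 p y) = act0 (f0 p) y.
Hypothesis fact1 : forall q g, f1 (act1 q g) = act1 (f1 q) g.
Hypothesis fpi0 : forall p, pi0 (f0 p) = pi0 p.
Hypothesis fpi1 : forall q, pi1 (f1 q) = pi1 q.

Definition pt0 i (w : set_type (U i)) : P0 G U := existT (P0fam G U) i (w, e0 G).
Definition chK i (w : set_type (U i)) := projT1 (f0 (pt0 w)).
Definition bco i (w : set_type (U i)) := (projT2 (f0 (pt0 w))).2.
Definition Aa i (w : set_type (U i)) := m0 (cx c' i (chK w) (val w)) (bco w).
Definition aa i v := match pselect (U i v) with
  | left H => Aa (exist (fun x => x \in U i) v (mem_set H)) | right _ => e0 G end.
Definition pt1 i j (w : set_type (U i `&` U j)) : P1 G U :=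
  existT (P1fam G U) (i, j) (w, e1 G).
Definition chKL i j (w : set_type (U i `&` U j)) := projT1 (f1 (pt1 w)).
Definition phi i j (w : set_type (U i `&` U j)) := (projT2 (f1 (pt1 w))).2.
Definition Dd i j (w : set_type (U i `&` U j)) :=
  dval (aa i (val w)) (ce c' i j (chKL w).2 (val w)) (ce c' i (chKL w).1 (chKL w).2 (val w))
       (cx c' i (chKL w).1 (val w)) (phi w).
Definition dd i j v := match pselect ((U i `&` U j) v) with
  | left H => Dd (exist (fun x => x \in U i `&` U j) v (mem_set H)) | right _ => e1 G end.

Lemma aa_val i (w : set_type (U i)) : aa i (val w) = Aa w.
Proof.
rewrite /aa; case: pselect => [H|H]; last by case: H; exact: set_valP.
by congr Aa; apply: st_eq.
Qed.

Lemma dd_val i j (w : set_type (U i `&` U j)) : dd i j (val w) = Dd w.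
Proof.
rewrite /dd; case: pselect => [H|H]; last by case: H; exact: set_valP.
by congr Dd; apply: st_eq.
Qed.

Lemma mem0 (p : P0 G U) : U (projT1 p) (pi0 p).
Proof. by case: p => i [w y]; exact: set_valP. Qed.

Lemma memK i (w : set_type (U i)) : U (chK w) (val w).
Proof. by have := mem0 (f0 (pt0 w)); rewrite fpi0. Qed.

Lemma chK_eq i (w1 w2 : set_type (U i)) : val w1 = val w2 -> chK w1 = chK w2.
Proof. by move=> e; rewrite (st_eq e). Qed.
Lemma bco_eq i (w1 w2 : set_type (U i)) : val w1 = val w2 -> bco w1 = bco w2.
Proof. by move=> e; rewrite (st_eq e). Qed.

Lemma f0_pt i (w : set_type (U i)) y :
  f0 (existT (P0fam G U) i (w, y)) = act0 (f0 (pt0 w)) y.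
Proof. by rewrite -fact0 /act0 /pt0 /= m01l. Qed.

Lemma F1_ i j (w : set_type (U i `&` U j)) : (chKL w).1 = chK (resl w).
Proof.
have := f_equal (@projT1 _ _) (fsrc (pt1 w)).
by rewrite /chKL /chK /srcP /pt1 /pt0 /= src1.
Qed.

Lemma F2_ i j (w : set_type (U i `&` U j)) : src (phi w) = bco (resl w).
Proof.
have := f_equal (fun p : P0 G U => (projT2 p).2) (fsrc (pt1 w)).
by rewrite /phi /bco /srcP /pt1 /pt0 /= src1.
Qed.

Lemma F3_ i j (w : set_type (U i `&` U j)) : (chKL w).2 = chK (resr w).
Proof.
have := f_equal (@projT1 _ _) (ftgt (pt1 w)).
by rewrite /chKL /chK /tgtP /pt1 /= f0_pt.
Qed.

Lemma F4_ i j (w : set_type (U i `&` U j)) :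
  m0 (i0 (cx c' (chKL w).1 (chKL w).2 (val w))) (tgt (phi w)) =
  m0 (bco (resr w)) (i0 (cx c i j (val w))).
Proof.
have := f_equal (fun p : P0 G U => (projT2 p).2) (ftgt (pt1 w)).
rewrite /chKL /phi /bco /tgtP /= f0_pt /act0 /= fpi1 /= => ->.
by rewrite tgt1 m01r.
Qed.

Lemma act1_pt i j (w : set_type (U i `&` U j)) g :
  f1 (existT (P1fam G U) (i, j) (w, g)) = act1 (f1 (pt1 w)) g.
Proof. by rewrite -fact1 /act1 /pt1 /= m11l. Qed.

Lemma F5_ i j k v (wi : set_type (U i)) (wj : set_type (U j)) (wk : set_type (U k))
  (wij : set_type (U i `&` U j)) (wjk : set_type (U j `&` U k)) (wik : set_type (U i `&` U k)) :
  val wi = v -> val wj = v -> val wk = v -> val wij = v -> val wjk = v -> val wik = v ->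
  m1 (phi wik) (m1 (ce c i j k v) (idm (cx c i j v))) =
  m1 (ce c' (chK wi) (chK wj) (chK wk) v)
     (Defs.comp (m1 (phi wij) (idm (cx c i j v))) (m1 (idm (cx c' (chK wi) (chK wj) v)) (phi wjk))).
Proof.
move=> vi vj vk vij vjk vik.
set x := cx c i j v.
pose al := existT (P1fam G U) (i, j) (wij, idm x).
pose be := pt1 wjk.
pose rh := existT (P1fam G U) (i, k) (wik, m1 (ce c i j k v) (Defs.comp (idm x) (m1 (idm (cx c i j (val wij))) (e1 G)))).
have hc : compP c al be rh.
  split.
    rewrite /tgtP /srcP /al /be /pt1 /pi1 /=.
    rewrite (@st_eq _ _ (resr wij) (resl wjk)) /=; last by rewrite vij vjk.
    by rewrite vij tgt_idm m0Vl src1.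
  exists i, j, k, v, wij, wjk, wik, (idm x), (e1 G).
  by split => //; rewrite /rh vij.
have := fcomp hc.
case=> _ [i' [j' [k' [v' [w1' [w2' [w3' [g' [h' [[ev1 [ev2 ev3]] ea eb er]]]]]]]]]].
rewrite /al act1_pt in ea.
rewrite /rh act1_pt in er.
have vv : v' = v.
  have := f_equal (@pi1 _ _ _ _) ea.
  rewrite /act1 /pi1 /= => h.
  have := fpi1 (pt1 wij); rewrite /pi1 /= h ev1 vij; exact.
rewrite vv in er.
have [ei ej] : i' = (chKL wij).1 /\ j' = (chKL wij).2.
  have := f_equal (@projT1 _ _) ea; rewrite /act1 /chKL /= => ->; done.
have [ej' ek] : j' = (chKL wjk).1 /\ k' = (chKL wjk).2.
  have := f_equal (@projT1 _ _) eb; rewrite /be /chKL /= => ->; done.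
have eg : g' = m1 (phi wij) (idm x).
  by have := f_equal (fun q : P1 G U => (projT2 q).2) ea; rewrite /act1 /phi /= => <-.
have eh : h' = phi wjk.
  by have := f_equal (fun q : P1 G U => (projT2 q).2) eb; rewrite /be /phi /= => <-.
have ci := comp_idml (idm x); rewrite src_idm in ci.
have := f_equal (fun q : P1 G U => (projT2 q).2) er.
rewrite /act1 /= -/(phi wik) vij m11r -/x ci => ->.
have -> : chK wi = i' by rewrite ei F1_; apply: chK_eq; rewrite vi.
have -> : chK wj = j' by rewrite ej F3_; apply: chK_eq; rewrite vj.
have -> : chK wk = k' by rewrite ek F3_; apply: chK_eq; rewrite vk.
rewrite eg eh.
done.
Qed.

Lemma cx_cont (e : cocycle G U) i j : {within U i `&` U j, continuous (cx e i j)}.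
Proof. by case: (cocycleP e). Qed.
Lemma ce_cont (e : cocycle G U) i j k : {within U i `&` U j `&` U k, continuous (ce e i j k)}.
Proof. by case: (cocycleP e). Qed.
Lemma ceE (e : cocycle G U) i j k v : (U i `&` U j `&` U k) v -> src (ce e i j k v) = e0 G.
Proof. by case: (cocycleP e) => _ _ h _ _; exact: h. Qed.
Lemma cx_coc (e : cocycle G U) i j k v : (U i `&` U j `&` U k) v ->
  m0 (m0 (tgt (ce e i j k v)) (cx e i j v)) (cx e j k v) = cx e i k v.
Proof. by case: (cocycleP e) => _ _ _ h _; exact: h. Qed.
Lemma ce_coc (e : cocycle G U) i j k l v : (U i `&` U j `&` U k `&` U l) v ->
  m1 (ce e i k l v) (ce e i j k v) = m1 (ce e i j l v) (actE (cx e i j v) (ce e j k l v)).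
Proof. by case: (cocycleP e) => _ _ _ _ h; exact: h. Qed.

Lemma pt0_cont i : continuous (@pt0 i).
Proof.
move=> w; apply: (@continuous_comp _ _ _ (fun w : set_type (U i) => (w, e0 G)) (existT (P0fam G U) i)); last exact: existT_continuous.
by apply: cont_pair; [exact: cvg_id | exact: cont_const].
Qed.

Lemma pt1_cont i j : continuous (@pt1 i j).
Proof.
move=> w; apply: (@continuous_comp _ _ _ (fun w : set_type (U i `&` U j) => (w, e1 G)) (existT (P1fam G U) (i, j))); last exact: existT_continuous.
by apply: cont_pair; [exact: cvg_id | exact: cont_const].
Qed.

Lemma bco_cont i : continuous (@bco i).
Proof.
move=> w; apply: (@continuous_comp _ _ _ (fun w => f0 (pt0 w)) (fun p : P0 G U => (projT2 p).2)).
  exact: (continuous_comp (@pt0_cont i w) (@cf0 _)).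
exact: cont_coord.
Qed.

Lemma phi_cont i j : continuous (@phi i j).
Proof.
move=> w; apply: (@continuous_comp _ _ _ (fun w => f1 (pt1 w)) (fun p : P1 G U => (projT2 p).2)).
  exact: (continuous_comp (@pt1_cont i j w) (@cf1 _)).
exact: cont_coord.
Qed.

Lemma cont_val_at (A B : set X) (T : topologicalType) (g : X -> T) (w : set_type A) :
  open B -> {within B, continuous g} -> B (val w) ->
  {for w, continuous (fun w : set_type A => g (val w))}.
Proof.
move=> oB cg Bw.
apply: (@continuous_comp _ _ _ (fun w : set_type A => val w) g); first exact: cont_val.
exact: (cont_open_at oB cg Bw).
Qed.

Lemma aa_cont i : {within U i, continuous (aa i)}.
Proof.
apply/subspace_sigL_continuousP.
have -> : sigL (U i) (aa i) = @Aa i by apply: funext => w; rewrite /sigL /= aa_val.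
move=> w0.
have nc := near_chart (continuous_comp (@pt0_cont i w0) (@cf0 _)).
apply: (@near_eq_cont _ _ (@Aa i) (fun w => m0 (cx c' i (chK w0) (val w)) (bco w)) w0).
- by near=> w; rewrite /Aa /chK (near nc w).
- by [].
apply: (cont_op2 (tg_mul_cont (G0_topgroup G))); last exact: bco_cont.
apply: (cont_val_at (B := U i `&` U (chK w0))).
- exact: openI.
- exact: cx_cont.
- by split; [exact: set_valP | exact: memK].
Unshelve. all: end_near.
Qed.

Lemma dval_cont (Z : topologicalType) (fa : Z -> G0 G) (g1 g2 : Z -> G1 G) (fy : Z -> G0 G) (fp : Z -> G1 G) z :
  {for z, continuous fa} -> {for z, continuous g1} -> {for z, continuous g2} ->
  {for z, continuous fy} -> {for z, continuous fp} ->
  {for z, continuous (fun w => dval (fa w) (g1 w) (g2 w) (fy w) (fp w))}.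
Proof.
move=> ca c1 c2 cy cp; rewrite /dval.
have cM := tg_mul_cont (G1_topgroup G).
have cI : forall h : Z -> G1 G, {for z, continuous h} -> {for z, continuous (fun w => i1 (h w))}.
  by move=> h ch; exact: (continuous_comp ch (@tg_inv_cont _ _ _ _ (G1_topgroup G) _)).
have cD : forall h : Z -> G0 G, {for z, continuous h} -> {for z, continuous (fun w => idm (h w))}.
  by move=> h ch; exact: (continuous_comp ch (@idm_cont G _)).
apply: (cont_op2 cM) => //; apply: (cont_op2 cM); last exact: cD.
apply: (cont_op2 cM) => //; apply: (cont_op2 cM); last exact: cI.
exact: cI (cD _ ca).
Qed.

Lemma memKL1 i j (w : set_type (U i `&` U j)) : U (chKL w).1 (val w).
Proof. by rewrite F1_; exact: (memK (resl w)). Qed.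
Lemma memKL2 i j (w : set_type (U i `&` U j)) : U (chKL w).2 (val w).
Proof. by rewrite F3_; exact: (memK (resr w)). Qed.

Lemma dd_cont i j : {within U i `&` U j, continuous (dd i j)}.
Proof.
apply/subspace_sigL_continuousP.
have -> : sigL (U i `&` U j) (dd i j) = @Dd i j by apply: funext => w; rewrite /sigL /= dd_val.
move=> w0.
have nc := near_chart (continuous_comp (@pt1_cont i j w0) (@cf1 _)).
have [Ui Uj] : (U i `&` U j) (val w0) by exact: set_valP.
have UK := memKL1 w0; have UL := memKL2 w0.
apply: (@near_eq_cont _ _ (@Dd i j) (fun w => dval (aa i (val w)) (ce c' i j (chKL w0).2 (val w))
   (ce c' i (chKL w0).1 (chKL w0).2 (val w)) (cx c' i (chKL w0).1 (val w)) (phi w)) w0).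
- by near=> w; rewrite /Dd /chKL (near nc w).
- by [].
apply: dval_cont.
- by apply: (cont_val_at (B := U i)) => //; exact: aa_cont.
- apply: (cont_val_at (B := U i `&` U j `&` U (chKL w0).2)); last by [].
  + by apply: openI; [apply: openI|].
  + exact: ce_cont.
- apply: (cont_val_at (B := U i `&` U (chKL w0).1 `&` U (chKL w0).2)); last by [].
  + by apply: openI; [apply: openI|].
  + exact: ce_cont.
- apply: (cont_val_at (B := U i `&` U (chKL w0).1)); last by [].
  + exact: openI.
  + exact: cx_cont.
- exact: phi_cont.
Unshelve. all: end_near.
Qed.

Lemma KL1 i j (w : set_type (U i `&` U j)) (wi : set_type (U i)) :
  val wi = val w -> (chKL w).1 = chK wi.
Proof. by move=> e; rewrite F1_; apply: chK_eq. Qed.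
Lemma KL2 i j (w : set_type (U i `&` U j)) (wj : set_type (U j)) :
  val wj = val w -> (chKL w).2 = chK wj.
Proof. by move=> e; rewrite F3_; apply: chK_eq. Qed.
Lemma phi_src i j (w : set_type (U i `&` U j)) (wi : set_type (U i)) :
  val wi = val w -> src (phi w) = bco wi.
Proof. by move=> e; rewrite F2_; apply: bco_eq. Qed.
Lemma phi_tgt i j (w : set_type (U i `&` U j)) (wi : set_type (U i)) (wj : set_type (U j)) :
  val wi = val w -> val wj = val w ->
  tgt (phi w) = m0 (m0 (cx c' (chK wi) (chK wj) (val w)) (bco wj)) (i0 (cx c i j (val w))).
Proof.
move=> ei ej; have := F4_ w.
rewrite (KL1 ei) (KL2 ej) (@bco_eq _ (resr w) wj) //.
move=> h; rewrite -m0A -h; g0simpl; done.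
Qed.

Definition mkw (A : set X) v (H : A v) : set_type A :=
  exist (fun x => x \in A) v (mem_set H).

Lemma bwd_main : cohomologous c c'.
Proof.
exists aa, dd; split.
- exact: aa_cont.
- exact: dd_cont.
- move=> i j v H.
  have [Hi Hj] := H.
  pose w := mkw H; pose wi := mkw Hi.
  rewrite /Defs.inE -[v]/(val w) dd_val /Dd.
  have UK := memK wi; have UL := memKL2 w.
  apply: (@back_E _ _ (bco wi)).
  + exact: phi_src.
  + by rewrite -[val w]/(val wi) aa_val /Aa (@KL1 _ _ w wi).
  + by apply: ceE.
  + apply: ceE; split; [split|] => //; rewrite (@KL1 _ _ w wi) //.
- move=> i j v H.
  have [Hi Hj] := H.
  pose w := mkw H; pose wi := mkw Hi; pose wj := mkw Hj.
  have UK := memK wi; have UL := memK wj.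
  rewrite -[v]/(val w) dd_val /Dd (@KL1 _ _ w wi) // (@KL2 _ _ w wj) //.
  rewrite -[val w]/(val wj) aa_val /Aa /=.
  apply: (@back_A _ _ (bco wj) _ _ _ (cx c' (chK wi) (chK wj) v) (cx c' i (chK wj) v)).
  + exact: phi_tgt.
  + by apply: cx_coc.
  + by apply: cx_coc.
- move=> i j k v H.
  have [[Hi Hj] Hk] := H.
  pose wi := mkw Hi; pose wj := mkw Hj; pose wk := mkw Hk.
  have Hij : (U i `&` U j) v by [].
  have Hik : (U i `&` U k) v by [].
  have Hjk : (U j `&` U k) v by [].
  pose wij := mkw Hij; pose wik := mkw Hik; pose wjk := mkw Hjk.
  have UK := memK wi; have UL := memK wj; have UM := memK wk.
  rewrite -[dd i j v]/(dd i j (val wij)) -[dd i k v]/(dd i k (val wik)) -[dd j k v]/(dd j k (val wjk)).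
  rewrite !dd_val /Dd.
  rewrite (@KL1 _ _ wij wi) // (@KL2 _ _ wij wj) // (@KL1 _ _ wik wi) // (@KL2 _ _ wik wk) //.
  rewrite (@KL1 _ _ wjk wj) // (@KL2 _ _ wjk wk) //.
  rewrite -[val wjk]/(val wj) (aa_val wj) /Aa /=.
  apply: (@back_B _ _ (bco wj) _ _ _ (cx c' (chK wi) (chK wj) v) (cx c' i (chK wj) v)).
  + exact: (@phi_tgt _ _ wij wi wj).
  + exact: (@phi_src _ _ wjk wj).
  + exact: (@F5_ _ _ _ v wi wj wk wij wjk wik).
  + by apply: cx_coc.
  + by apply: cx_coc.
  + by apply: ce_coc.
  + by apply: ce_coc.
  + by apply: ce_coc.
  + by apply: ceE.
  + by apply: ceE.
  + by apply: ceE.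
  + by apply: ceE.
Qed.

End Bwd2.

End Aux.

Theorem lemma6 (G : TwoGroup) (X : topologicalType) (I : choiceType)
  (U : I -> set X) (U_open : forall i, open (U i))
  (U_cover : \bigcup_i U i = setT)
  (c c' : cocycle G U) :
  cohomologous c c' <->
  exists (f0 : P0 G U -> P0 G U) (f1 : P1 G U -> P1 G U),
    bundle_morphism c c' f0 f1.
Proof.
split.
- case=> a [d [ha hd hdE hx he]].
  exists (Aux.F0 a), (Aux.F1 a d).
  exact: (Aux.F_morph U_open ha hd hdE hx he).
- case=> f0 [f1 [[cf0 cf1] [[fsrc [ftgt fcomp]] [[fact0 fact1] [fpi0 fpi1]]]]].
  exact: (@Aux.bwd_main G X I U U_open c c' f0 f1 cf0 cf1 fsrc ftgt fcomp fact0 fact1 fpi0 fpi1).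
Qed.
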